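(* Let $(T,f,(\le_h))$ be an ordered merge tree. Then $\mathcal T(\mathcal L((T,f,(\le_h))))=(T,f,(\le_h))$.
   Context: A merge tree $(T,f)$: a finite rooted tree $T$ identified with its topological realisation, with a continuous $f\colon T\to\mathbb{R}\cup\{\infty\}$ strictly increasing towards the root, $f(v)=\infty$ iff $v$ is the root; lowest leaf at height $0$; $L(T)$ is the set of leaves. $T_x$ is the subtree of descendants of $x$; $\mathrm{lca}$ the lowest common ancestor; $\mathrm{anc}_h(x)$ the unique ancestor of $x$ at height $h\ge f(x)$; $\mathbb{L}_h=\{x:f(x)=h\}$. A layer-order is a family $(\le_h)_{h\ge0}$ of total orders on the $\mathbb{L}_h$ that is consistent ($h_1\le h_2$ and $x_1\le_{h_1}x_2$ imply $\mathrm{anc}_{h_2}(x_1)\le_{h_2}\mathrm{anc}_{h_2}(x_2)$); $(T,f,(\le_h))$ is an ordered merge tree. A leaf-order is a total order $\sqsubseteq_L$ on $L(T)$ such that $u_1\sqsubseteq_L u\sqsubseteq_L u_2$ implies $u\in T_{\mathrm{lca}(u_1,u_2)}$; $(T,f,\sqsubseteq_L)$ is a leaf-ordered merge tree. $\mathcal L((T,f,(\le_h)))=(T,f,\sqsubseteq_L)$ with $u_1\sqsubseteq_L u_2$ iff $\mathrm{anc}_h(u_1)\le_h\mathrm{anc}_h(u_2)$ for $h=\max(f(u_1),f(u_2))$. $\mathcal T((T,f,\sqsubseteq_L))=(T,f,(\le_h))$ with $x_1\le_h x_2$ (for $x_1,x_2\in\mathbb{L}_h$) iff $x_1=x_2$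 or $u_1\sqsubseteq_L u_2$ for all leaves $u_1\in T_{x_1}$, $u_2\in T_{x_2}$. *)

(* Defs.v *)
From HB Require Import structures.
From mathcomp Require Import all_boot all_order all_algebra.
From mathcomp Require Import reals.
Set Implicit Arguments. Unset Strict Implicit. Unset Printing Implicit Defensive.
Import Order.TTheory GRing.Theory Num.Theory.
Local Open Scope ring_scope.

(* The combinatorial tree is given by a finite vertex
   type, a parent map and a root; [mt_f v] is the (finite) height of every
   non-root vertex, the root having height +infinity.

   Topological realisation: since f is continuous and strictly increasing
   towards the root, the points of the (open, half-open) edge from a non-root
   vertex v to its parent are in bijection with the heights strictly between
   f v and f (parent v) (resp. +oo when the parent is the root).  Hence every
   non-root point of the realisation is represented uniquely by a pair (v, h)
   where v is the lower endpoint of its edge (or the vertex itself) and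
   f v <= h < f (parent v).  The root (the unique point with f = oo) plays no
   role in the layers L_h, h >= 0 real, and is not represented. *)
Record merge_tree (R : realType) := MergeTree {
  mt_V : finType;
  mt_par : mt_V -> mt_V;
  mt_root : mt_V;
  mt_f : mt_V -> R;
  mt_par_root : mt_par mt_root = mt_root;
  mt_rooted : forall v, exists n, iter n mt_par v = mt_root;
  mt_incr : forall v, v != mt_root -> mt_par v != mt_root ->
            mt_f v < mt_f (mt_par v)
}.

Section MergeTreeDefs.
Variable R : realType.
Variable M : merge_tree R.

Notation V := (mt_V M).
Notation par := (@mt_par R M).
Notation root := (mt_root M).
Notation f := (@mt_f R M).

Definition point := (V * R)%type.

Definition is_point (x : point) : Prop :=
  x.1 != root /\ f x.1 <= x.2 /\ (par x.1 = root \/ x.2 < f (par x.1)).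

Definition height (x : point) : R := x.2.

Definition in_layer (h : R) (x : point) : Prop := is_point x /\ height x = h.

Definition vanc (v w : V) : Prop := exists n, iter n par v = w.

Definition desc (x y : point) : Prop :=
  is_point x /\ is_point y /\ height x <= height y /\ vanc x.1 y.1.

Definition is_leaf (v : V) : Prop :=
  v != root /\ forall u, u != root -> par u != v.

Definition leaf_point (u : V) : point := (u, f u).

Definition climb_step (h : R) (w : V) : V :=
  if (par w != root) && (f (par w) <= h) then par w else w.

Definition anc (h : R) (x : point) : point :=
  (iter #|V| (climb_step h) x.1, h).

Definition layer_rel := R -> point -> point -> Prop.

Definition total_order_on (P : point -> Prop) (le : point -> point -> Prop) :=
  (forall x, P x -> le x x) /\
  (forall x y, P x -> P y -> le x y -> le y x -> x = y) /\
  (forall x y z, P x -> P y -> P z -> le x y -> le y z -> le x z) /\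
  (forall x y, P x -> P y -> le x y \/ le y x).

Definition is_layer_order (ord : layer_rel) : Prop :=
  (forall h, 0 <= h -> total_order_on (in_layer h) (ord h)) /\
  (forall h1 h2 x1 x2, 0 <= h1 -> h1 <= h2 ->
     in_layer h1 x1 -> in_layer h1 x2 -> ord h1 x1 x2 ->
     ord h2 (anc h2 x1) (anc h2 x2)).

Definition Lmap (ord : layer_rel) (u1 u2 : V) : Prop :=
  let h := Num.max (f u1) (f u2) in
  ord h (anc h (leaf_point u1)) (anc h (leaf_point u2)).

Definition Tmap (sq : V -> V -> Prop) (h : R) (x1 x2 : point) : Prop :=
  x1 = x2 \/
  (forall u1 u2, is_leaf u1 -> is_leaf u2 ->
     desc (leaf_point u1) x1 -> desc (leaf_point u2) x2 -> sq u1 u2).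

End MergeTreeDefs.

Definition lowest_leaf_at_0 (R : realType) (M : merge_tree R) : Prop :=
  (exists u, @is_leaf R M u /\ @mt_f R M u = 0) /\
  (forall u, @is_leaf R M u -> 0 <= @mt_f R M u).

(* Main.v *)
Require Import Defs.
From mathcomp Require Import all_boot all_order all_algebra.
From mathcomp Require Import reals.
Import Order.TTheory GRing.Theory Num.Theory.
Local Open Scope ring_scope.
Set Implicit Arguments. Unset Strict Implicit.

Lemma iter_par_root (R : realType) (M : merge_tree R) k :
  iter k ((@mt_par _ M)) (mt_root M) = mt_root M.
Proof. by elim: k => //= k ->; exact: mt_par_root. Qed.

Lemma vanc_trans (R : realType) (M : merge_tree R) (u v w : mt_V M) :
  vanc u v -> vanc v w -> vanc u w.
Proof. by move=> [a <-] [b <-]; exists (b + a)%N; rewrite iterD. Qed.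

Lemma vanc_par (R : realType) (M : merge_tree R) (u : mt_V M) :
  vanc u ((@mt_par _ M) u).
Proof. by exists 1%N. Qed.

Lemma f_mono (R : realType) (M : merge_tree R) (u w : mt_V M) :
  vanc u w -> w != mt_root M -> (@mt_f _ M) u <= (@mt_f _ M) w.
Proof.
move=> [k <-]; elim: k => [|k IH] /= hk; first exact: lexx.
have hk' : iter k ((@mt_par _ M)) u != mt_root M.
  by apply/negP => /eqP e; move: hk; rewrite e mt_par_root eqxx.
apply: le_trans (IH hk') _; apply: ltW; exact: mt_incr.
Qed.

Lemma climb_inv (R : realType) (M : merge_tree R) (h : R) (v : mt_V M) :
  v != mt_root M -> (@mt_f _ M) v <= h -> forall k,
  let w := iter k (@climb_step _ M h) v in
  w != mt_root M /\ (@mt_f _ M) w <= h /\ vanc v w.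
Proof.
move=> hv hf; elim => [|k IH] /=; first by split => //; split => //; exists 0%N.
move: (iter k _ v) IH => w [hr [hw hva]].
rewrite /climb_step; case: ifP => [/andP [hp hfp] | _] //.
split => //; split => //; exact: vanc_trans hva (vanc_par _).
Qed.

Lemma climb_fixed (R : realType) (M : merge_tree R) (h : R) (v : mt_V M) :
  v != mt_root M -> (@mt_f _ M) v <= h ->
  @climb_step _ M h (iter #|mt_V M| (@climb_step _ M h) v) = iter #|mt_V M| (@climb_step _ M h) v.
Proof.
move=> hv hf.
set n := #|mt_V M|.
pose g k := iter k (@climb_step _ M h) v.
have stay : forall k d, @climb_step _ M h (g k) = g k -> g (k + d)%N = g k.
  move=> k d e; elim: d => [|d IH]; first by rewrite addn0.
  by rewrite addnS /g /= -/(g (k + d)%N) IH e.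
apply/eqP; apply/negPn/negP => hnf.
have nf : forall k, (k <= n)%N -> @climb_step _ M h (g k) != g k.
  move=> k hk; apply/negP => /eqP e.
  have := stay k (n - k)%N e; rewrite subnKC // => en.
  by move: hnf; rewrite -/(g n) en e eqxx.
have step : forall k, (k <= n)%N -> (@mt_f _ M) (g k) < (@mt_f _ M) (g k.+1).
  move=> k hk; have := nf k hk; have [hr _] := climb_inv hv hf k.
  rewrite /g /=; move: (iter k _ v) hr => w hr.
  rewrite /climb_step; case: ifP => [/andP [hp _] _ | _]; last by rewrite eqxx.
  exact: mt_incr.
have inc : forall j, (j <= n)%N -> forall i, (i < j)%N -> (@mt_f _ M) (g i) < (@mt_f _ M) (g j).
  elim => [|j IH] // hj i; rewrite ltnS leq_eqVlt => /orP [/eqP -> | hij].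
    by apply: step; apply: ltnW.
  apply: lt_trans (IH (ltnW hj) i hij) _; by apply: step; apply: ltnW.
have inj : injective (fun i : 'I_n.+1 => g i).
  move=> i j e; apply/val_inj/eqP.
  case: (ltngtP i j) => // hij.
  - have := inc j (ltn_ord j) i hij; by rewrite e ltxx.
  - have := inc i (ltn_ord i) j hij; by rewrite e ltxx.
have := @leq_card _ _ _ inj; by rewrite card_ord ltnn.
Qed.

Lemma anc_spec (R : realType) (M : merge_tree R) (h : R) (x : point M) :
  x.1 != mt_root M -> (@mt_f _ M) x.1 <= h ->
  in_layer h (anc h x) /\ vanc x.1 (anc h x).1.
Proof.
move=> hv hf.
have [hr [hw hva]] := climb_inv hv hf #|mt_V M|.
have hfix := climb_fixed hv hf.
rewrite /in_layer /anc /height /=; split => //; split => //; split => //; split => //.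
move: hfix; set w := iter _ _ _.
rewrite /climb_step; case: ifP => [/andP [hp _] e | hn _].
  by have := mt_incr hr hp; rewrite e ltxx.
case: (eqVneq ((@mt_par _ M) w) (mt_root M)) => [-> | hp]; first by left.
right; rewrite hp /= in hn; by rewrite ltNge hn.
Qed.

Lemma point_uniq_aux (R : realType) (M : merge_tree R) (w1 w2 : mt_V M) h d :
  is_point (w1, h) -> w2 != mt_root M -> (@mt_f _ M) w2 <= h ->
  w2 = iter d ((@mt_par _ M)) w1 -> w1 = w2.
Proof.
case: d => [|d] hp1 hr2 hf2 e; first by rewrite e.
rewrite iterSr in e.
move: hp1 => [_ [_ /= [hpr | hlt]]].
  by move: hr2; rewrite e hpr iter_par_root eqxx.
have := f_mono (ex_intro _ d (esym e)) hr2.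
move=> hle; have := lt_le_trans hlt (le_trans hle hf2); by rewrite ltxx.
Qed.

Lemma point_uniq (R : realType) (M : merge_tree R) (v : mt_V M) (p1 p2 : point M) :
  is_point p1 -> is_point p2 -> p1.2 = p2.2 -> vanc v p1.1 -> vanc v p2.1 -> p1 = p2.
Proof.
case: p1 => w1 h1; case: p2 => w2 h2 /= hp1 hp2 eh [a ea] [b eb].
subst h2; congr pair.
case: (leqP a b) => hab.
  apply: (point_uniq_aux (d := (b - a)%N) hp1); try by case: hp2 => [? [? _]].
  by rewrite -ea -eb -iterD subnK.
apply/esym; apply: (point_uniq_aux (d := (a - b)%N) hp2); try by case: hp1 => [? [? _]].
by rewrite -ea -eb -iterD subnK // ltnW.
Qed.

Lemma anc_unique (R : realType) (M : merge_tree R) (v : mt_V M) h (x y : point M) :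
  x.1 != mt_root M -> (@mt_f _ M) x.1 <= h -> in_layer h y ->
  vanc v x.1 -> vanc v y.1 -> anc h x = y.
Proof.
move=> hr hf [hpy hy] hv1 hv2.
have [[hpa ha] hva] := anc_spec hr hf.
apply: (point_uniq (v := v)) => //.
exact: vanc_trans hv1 hva.
Qed.

Lemma leaf_below (R : realType) (M : merge_tree R) (v : mt_V M) :
  v != mt_root M -> exists u, is_leaf u /\ vanc u v.
Proof.
suff: forall n (v : mt_V M), (#|[set w | ((@mt_f _ M) w < (@mt_f _ M) v)%R]| <= n)%N ->
  v != mt_root M -> exists u, is_leaf u /\ vanc u v by apply.
elim => [|n IH] {}v hc hv;
  (case: (boolP [exists u, (u != mt_root M) && ((@mt_par _ M) u == v)]) =>
    [/existsP [u /andP [hu /eqP hpu]] | hno];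
  last by exists v; split; [split => // u hu; apply/negP => /eqP e;
    move/negP: hno; apply; apply/existsP; exists u; rewrite hu e eqxx
  | exists 0%N]).
all: have fuv : (@mt_f _ M) u < (@mt_f _ M) v by rewrite -hpu; apply: mt_incr => //; rewrite hpu.
all: have hlt : (#|[set w | ((@mt_f _ M) w < (@mt_f _ M) u)%R]| < #|[set w | ((@mt_f _ M) w < (@mt_f _ M) v)%R]|)%N
  by apply: proper_card; apply/properP; split;
     [apply/subsetP => w; rewrite !inE => hw; exact: lt_trans hw fuv
     | exists u; rewrite !inE ?fuv ?ltxx].
  by have := leq_trans hlt hc.
have [u' [hl hva]] := IH u (leq_trans hlt hc) hu.
exists u'; split => //; apply: vanc_trans hva _; rewrite -hpu; exact: vanc_par.
Qed.

Unset Implicit Arguments. Set Strict Implicit.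

(* T(L((T,f,(<=_h)))) = (T,f,(<=_h)): the tree and f are unchanged by
   construction; the layer-orders agree on every layer L_h, h >= 0. *)
Theorem lemma8 (R : realType) (M : merge_tree R) (ord : layer_rel M) :
  lowest_leaf_at_0 M ->
  is_layer_order ord ->
  forall h : R, 0 <= h ->
  forall x1 x2 : point M, in_layer h x1 -> in_layer h x2 ->
  (Tmap (Lmap ord) h x1 x2 <-> ord h x1 x2).
Proof.
move=> [_ hge0] [hto hcons] h h0 x1 x2 hx1 hx2.
have [hrefl [hanti [_ htot]]] := hto h h0.
have key : forall (u : mt_V M) (x : point M), is_leaf u -> in_layer h x ->
    vanc u x.1 -> forall H, mt_f u <= H -> H <= h ->
    in_layer H (anc H (leaf_point u)) /\ anc h (anc H (leaf_point u)) = x.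
  move=> u x [hu _] hx hv H hfu hH.
  have [ha hva] := @anc_spec R M H (leaf_point u) hu hfu.
  split => //.
  apply: (@anc_unique R M u) => //.
  - by case: ha => [[]].
  - case: ha => [[_ [hf _]] he]; apply: le_trans hf _.
    by rewrite /height in he; rewrite he.
have hdesc : forall (u : mt_V M) (x : point M), is_leaf u -> in_layer h x ->
    vanc u x.1 -> desc (leaf_point u) x /\ mt_f u <= h.
  move=> u x [hu _] [[hxr [hxf hxp]] hxh] hv.
  have hle : mt_f u <= h.
    apply: le_trans (f_mono hv hxr) _; apply: le_trans hxf _.
    by rewrite /height in hxh; rewrite hxh.
  split => //; split; last (split; first by split).
    split => //; split => //=.
    case: (eqVneq (mt_par u) (mt_root M)) => [-> | hp]; first by left.
    by right; apply: mt_incr.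
  by split => //; rewrite /height /= -/(height x) hxh.
split.
- case => [<- | hall]; first exact: hrefl.
  have [u1 [hl1 hv1]] := leaf_below hx1.1.1.
  have [u2 [hl2 hv2]] := leaf_below hx2.1.1.
  have [hd1 hf1h] := hdesc u1 x1 hl1 hx1 hv1.
  have [hd2 hf2h] := hdesc u2 x2 hl2 hx2 hv2.
  have := hall u1 u2 hl1 hl2 hd1 hd2; rewrite /Lmap.
  set H := Num.max _ _.
  have hf1 : mt_f u1 <= H by rewrite le_max lexx.
  have hf2 : mt_f u2 <= H by rewrite le_max lexx orbT.
  have hH : H <= h by rewrite ge_max hf1h hf2h.
  have hH0 : 0 <= H := le_trans (hge0 u1 hl1) hf1.
  have [hl1' he1] := key u1 x1 hl1 hx1 hv1 H hf1 hH.
  have [hl2' he2] := key u2 x2 hl2 hx2 hv2 H hf2 hH.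
  move=> ho; have := hcons H h _ _ hH0 hH hl1' hl2' ho.
  by rewrite he1 he2.
- move=> ho; case: (eqVneq x1 x2) => [e | ne]; [by left | right].
  move=> u1 u2 hl1 hl2 [_ [_ [_ hv1]]] [_ [_ [_ hv2]]].
  have [_ hf1h] := hdesc u1 x1 hl1 hx1 hv1.
  have [_ hf2h] := hdesc u2 x2 hl2 hx2 hv2.
  rewrite /Lmap; set H := Num.max _ _.
  have hf1 : mt_f u1 <= H by rewrite le_max lexx.
  have hf2 : mt_f u2 <= H by rewrite le_max lexx orbT.
  have hH : H <= h by rewrite ge_max hf1h hf2h.
  have hH0 : 0 <= H := le_trans (hge0 u1 hl1) hf1.
  have [hl1' he1] := key u1 x1 hl1 hx1 hv1 H hf1 hH.
  have [hl2' he2] := key u2 x2 hl2 hx2 hv2 H hf2 hH.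
  have [_ [_ [_ htotH]]] := hto H hH0.
  case: (htotH _ _ hl1' hl2') => // o21.
  have := hcons H h _ _ hH0 hH hl2' hl1' o21; rewrite he1 he2 => o'.
  exfalso; by move/eqP: ne; apply; apply: hanti.
Qed.
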